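(* Let $\Sigma$ be a $(\mathbf d,\mathbf z)$-cluster pattern with principal coefficients and initial seed $(\mathbf x,\mathbf y,B)$. Equip $\mathbb Z[x_1^{\pm1},\dots,x_n^{\pm1},\mathbf y,\mathbf z]$ with the $\mathbb Z^n$-grading $\deg x_i=\mathbf e_i$, $\deg y_j=-\mathbf b_j:=-\sum_{i=1}^nb_{ij}\mathbf e_i$ (minus the $j$-th column of $B$), $\deg z_{i,s}=0$, where $\mathbf e_i$ are the unit vectors. Then every $X$-function $X^t_i(\mathbf x,\mathbf y,\mathbf z)$ of $\Sigma$ is homogeneous with respect to this grading.
   Context: All matrices are integer and $[a]_+=\max(a,0)$. A semifield $\mathbb{P}$ is an abelian multiplicative group with a commutative, associative operation $\oplus$ over which multiplication distributes; $\mathbb{Z}\mathbb{P}$ its group ring, $\mathbb{Q}\mathbb{P}$ the fraction field of $\mathbb Z\mathbb P$, $\mathcal{F}=\mathbb{Q}\mathbb{P}(w_1,\dots,w_n)$. A seed in $\mathbb{P}$ is $(\mathbf{x},\mathbf{y},B)$ with $B=(b_{ij})$ skew-symmetrizable $n\times n$, $\mathbf{x}\in\mathcal{F}^n$, $\mathbf{y}\in\mathbb{P}^n$. Mutation data: positive integers $\mathbf d$ and $z_{i,s}$ ($1\le s\le d_i-1$) with $z_{i,s}=z_{i,d_i-s}$, $z_{i,0}=z_{i,d_i}=1$. The $(\mathbf d,\mathbf z)$-mutation $\mu_k(\mathbf{x},\mathbf{y},B)=(\mathbf{x}',\mathbf{y}',B')$: $b'_{ij}=-b_{ij}$ if $i=k$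 or $j=k$, else $b'_{ij}=b_{ij}+d_k([-b_{ik}]_+b_{kj}+b_{ik}[b_{kj}]_+)$; $y'_k=y_k^{-1}$, $y'_i=y_i(y_k^{[\varepsilon b_{ki}]_+})^{d_k}(\bigoplus_{s=0}^{d_k}z_{k,s}y_k^{\varepsilon s})^{-b_{ki}}$ ($i\ne k$); $x'_i=x_i$ ($i\ne k$), $x'_k=x_k^{-1}(\prod_jx_j^{[-\varepsilon b_{jk}]_+})^{d_k}\frac{\sum_{s=0}^{d_k}z_{k,s}\hat y_k^{\varepsilon s}}{\bigoplus_{s=0}^{d_k}z_{k,s}y_k^{\varepsilon s}}$, $\hat y_i=y_i\prod_jx_j^{b_{ji}}$, $\varepsilon=\pm1$. $\mathbb T_n$ is the $n$-regular tree with edges labeled $1,\dots,n$, distinct labels at each vertex. A $(\mathbf d,\mathbf z)$-cluster pattern in $\mathbb P$ assigns seeds $(\mathbf x_t,\mathbf y_t,B_t)$, $\mathbf x_t=(x^t_i)$, to vertices, related by $\mu_k$ along edges labeled $k$, with initial seed at a fixed vertex $t_0$. Principal coefficients: with $y_1,\dots,y_n$, $z_{i,s}$ ($z_{i,s}=z_{i,d_i-s}$) formal variables, $\mathrm{Trop}(\mathbf y,\mathbf z)$ is the free abelian group they generate with $\oplus$ the componentwise minimum of exponents; the pattern with principal coefficients is the one in $\mathrm{Trop}(\mathbf y,\mathbf z)$ with initial seed $(\mathbf x,\mathbf y,B)$. Each $x^t_i$ equals a Laurent polynomial $X^t_i(\mathbf x,\mathbf y,\mathbf z)$ (the $X$-function),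 which lies in $\mathbb Z[x_1^{\pm1},\dots,x_n^{\pm1},\mathbf y,\mathbf z]$. *)

(* Defs.v *)
From HB Require Import structures.
From mathcomp Require Import all_boot all_order all_algebra.
Set Implicit Arguments. Unset Strict Implicit. Unset Printing Implicit Defensive.
Import Order.TTheory GRing.Theory Num.Theory.
Local Open Scope ring_scope.

(* Polynomial ring Z[v_0, ..., v_{k-1}] as an iterated univariate polynomial ring. *)
Fixpoint mp (k : nat) : idomainType :=
  if k is k'.+1 then ({poly mp k'} : idomainType) else int.

(* The variable v_v in Z[v_0,...,v_{k-1}] (0 if v >= k). *)
Fixpoint mvar (k v : nat) : mp k :=
  match k return mp k with
  | 0 => 0
  | k'.+1 => if v == k' then ('X : {poly mp k'}) else ((mvar k' v)%:P : {poly mp k'})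
  end.

Definition FF (k : nat) : fieldType := {fraction (mp k)}.
Definition fvar (k v : nat) : FF k := FracField.tofrac (mvar k v).

Definition pp (a : int) : int := Order.max a 0.

Section Cluster.
Variables (n : nat) (d : 'I_n -> nat) (B0 : 'M[int]_n).

(* Variable numbering: x_j |-> j, y_j |-> n + j, and the formal variable
   z_{i,r} = z_{i,d_i - r} (1 <= r <= d_i/2) |-> 2n + zoff i + (r-1). *)
Definition zoff (i : 'I_n) : nat := (\sum_(j < n | (j < i)%N) (d j)./2)%N.
Definition Nvars : nat := (2 * n + \sum_(j < n) (d j)./2)%N.
Definition yidx (j : 'I_n) : nat := (n + j)%N.
Definition zidx (i : 'I_n) (r : nat) : nat := (2 * n + zoff i + r.-1)%N.

Definition Fld : fieldType := FF Nvars.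
Definition var (v : nat) : Fld := fvar Nvars v.

(* The tropical semifield Trop(y, z): Laurent monomials in the y and z
   variables, encoded by exponent functions (only indices n <= v < Nvars matter). *)
Definition trop := nat -> int.
Definition tone : trop := fun _ => 0.
Definition tmul (a b : trop) : trop := fun v => a v + b v.
Definition tinv (a : trop) : trop := fun v => - a v.
Definition tpow (a : trop) (m : int) : trop := fun v => a v * m.
Definition tadd (a b : trop) : trop := fun v => Order.min (a v) (b v).
Definition tvar (v : nat) : trop := fun u => if u == v then 1 else 0.

Definition temb (e : trop) : Fld :=
  \prod_(v < Nvars | (n <= v)%N) var v ^ (e v).

Definition tz (k : 'I_n) (s : nat) : trop :=
  if (s == 0)%N || (s == d k) then tone else tvar (zidx k (minn s (d k - s))).
Definition fz (k : 'I_n) (s : nat) : Fld :=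
  if (s == 0)%N || (s == d k) then 1 else var (zidx k (minn s (d k - s))).

Definition tsum (k : 'I_n) (y : trop) : trop :=
  foldr (fun s acc => tadd (tmul (tz k s) (tpow y s%:Z)) acc)
        (tmul (tz k 0) (tpow y 0)) (iota 1 (d k)).

Record seed := Seed { sx : 'I_n -> Fld; sy : 'I_n -> trop; sB : 'M[int]_n }.

(* (d, z)-mutation mu_k with eps = +1 *)
Definition mutB (k : 'I_n) (B : 'M[int]_n) : 'M[int]_n :=
  \matrix_(i, j) if (i == k) || (j == k) then - B i j
    else B i j + (d k)%:Z * (pp (- B i k) * B k j + B i k * pp (B k j)).

Definition muty (k : 'I_n) (B : 'M[int]_n) (y : 'I_n -> trop) : 'I_n -> trop :=
  fun i => if i == k then tinv (y k)
    else tmul (tmul (y i) (tpow (tpow (y k) (pp (B k i))) (d k)%:Z))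
              (tpow (tsum k (y k)) (- B k i)).

Definition yhat (B : 'M[int]_n) (x : 'I_n -> Fld) (y : 'I_n -> trop) (i : 'I_n) : Fld :=
  temb (y i) * \prod_(j < n) x j ^ (B j i).

Definition mutx (k : 'I_n) (B : 'M[int]_n) (x : 'I_n -> Fld) (y : 'I_n -> trop)
  : 'I_n -> Fld :=
  fun i => if i == k then
      (x k)^-1 * (\prod_(j < n) x j ^ pp (- B j k)) ^+ d k
      * (\sum_(s < (d k).+1) fz k s * yhat B x y k ^+ s)
      / temb (tsum k (y k))
    else x i.

Definition mutate (k : 'I_n) (S : seed) : seed :=
  Seed (mutx k (sB S) (sx S) (sy S)) (muty k (sB S) (sy S)) (mutB k (sB S)).

Definition init_seed : seed :=
  Seed (fun i => var i) (fun i => tvar (yidx i)) B0.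

(* Vertices of T_n = reduced words of edge labels read from t0. *)
Definition reduced (w : seq 'I_n) : bool := sorted (fun a b : 'I_n => a != b) w.
Definition seed_at (w : seq 'I_n) : seed := foldl (fun S k => mutate k S) init_seed w.

(* Elements of Z[x^{±1}, y, z]: finite Z-linear combinations of monomials
   x^a * (y,z)^b, a : Z^n, b : exponents (>= 0) of variables n <= v < Nvars. *)
Definition mono := (('I_n -> int) * (nat -> nat))%type.
Definition monv (m : mono) : Fld :=
  (\prod_(j < n) var j ^ (m.1 j)) * \prod_(v < Nvars | (n <= v)%N) var v ^+ (m.2 v).
Definition lpoly (L : seq (int * mono)) : Fld := \sum_(t <- L) t.1%:~R * monv t.2.

Definition mdeg (m : mono) : 'I_n -> int :=
  fun i => m.1 i - \sum_(j < n) B0 i j * (m.2 (yidx j))%:Z.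

Definition homogeneous (L : seq (int * mono)) : Prop :=
  exists (g : 'I_n -> int) (L' : seq (int * mono)),
    all (fun t => [forall i, mdeg t.2 i == g i]) L' /\ lpoly L' = lpoly L.

End Cluster.

Definition skew_symmetrizable (n : nat) (B : 'M[int]_n) : Prop :=
  exists D : 'I_n -> nat, (forall i, (0 < D i)%N) /\
    forall i j, (D i)%:Z * B i j = - ((D j)%:Z * B j i).

(* Main.v *)
Require Import Defs.
From HB Require Import structures.
From mathcomp Require Import all_boot all_order all_algebra.
From mathcomp Require Import ring lra zify.
Set Implicit Arguments. Unset Strict Implicit. Unset Printing Implicit Defensive.
Import Order.TTheory GRing.Theory Num.Theory.
Local Open Scope ring_scope.
Local Open Scope quotient_scope.

Lemma divB_gen (F : fieldType) (x u y v : F) : u != 0 -> v != 0 -> x/u - y/v = (x*v - y*u)/(u*v).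
Proof. move=> hu hv. field. by rewrite hu hv. Qed.

Section Lift.
Variables (R : idomainType).
Lemma frac_repr (x : {fraction R}) :
  x = FracField.tofrac (\n_(repr x)) / FracField.tofrac (\d_(repr x)).
Proof.
have hd : FracField.tofrac (\d_(repr x)) != 0 by rewrite tofrac_eq0 denom_ratioP.
apply: (mulIf hd); rewrite mulrVK ?unitfE //.
rewrite -{1}[x]reprK.
unlock FracField.tofrac. rewrite !piE.
apply/eqmodP => /=. rewrite FracField.equivfE /= !numden_Ratio ?oner_eq0 ?mulf_neq0 ?denom_ratioP //.
all: by rewrite ?mulr1 ?oner_eq0 // mulrC.
Qed.

Lemma frac_ex (x : {fraction R}) : exists a b, b != 0 /\ x = FracField.tofrac a / FracField.tofrac b.
Proof. by exists (\n_(repr x)), (\d_(repr x)); split; [exact: denom_ratioP|exact: frac_repr]. Qed.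

Variables (T : fieldType) (f : {rmorphism R -> T}) (finj : injective f).

Definition liftF (h : injective f) (x : {fraction R}) : T := f (\n_(repr x)) / f (\d_(repr x)).

Local Notation lF := (liftF finj).
Lemma fneq0 b : b != 0 -> f b != 0.
Proof. by move=> hb; apply: contra hb => /eqP; rewrite -(rmorph0 f) => /finj ->. Qed.

Lemma liftF_frac a b : b != 0 ->
  lF (FracField.tofrac a / FracField.tofrac b) = f a / f b.
Proof.
move=> hb; rewrite /lF.
set x := (FracField.tofrac a / FracField.tofrac b : {fraction R}).
have hd := denom_ratioP (repr x).
have e := frac_repr x.
have hb' : FracField.tofrac b != 0 :> {fraction R} by rewrite tofrac_eq0.
have hd' : FracField.tofrac \d_(repr x) != 0 :> {fraction R} by rewrite tofrac_eq0.
have : a * \d_(repr x) = \n_(repr x) * b.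
  apply/eqP; rewrite -tofrac_eq !rmorphM /=; apply/eqP.
  move: e; rewrite {1}/x => /(congr1 (fun y => y * FracField.tofrac b * FracField.tofrac \d_(repr x))).
  rewrite mulrVK ?unitfE // => ->.
  by rewrite mulrAC mulrVK ?unitfE.
move/(congr1 f); rewrite !rmorphM /= => e2.
have fb := fneq0 hb; have fd := fneq0 hd.
apply: (mulIf fb); apply: (mulIf fd).
rewrite mulrVK ?unitfE // -mulrA [f b * _]mulrC mulrA mulrVK ?unitfE //.
Qed.

Lemma liftF_tofrac a : lF (FracField.tofrac a) = f a.
Proof.
have h := @liftF_frac a 1 (oner_neq0 _). by rewrite !rmorph1 !divr1 in h.
Qed.

Lemma liftF_is_zmod : zmod_morphism lF.
Proof.
move=> x y.
have [a [b [hb ->]]] := frac_ex x.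
have [c [e [he ->]]] := frac_ex y.
have hb' : FracField.tofrac b != 0 :> {fraction R} by rewrite tofrac_eq0.
have he' : FracField.tofrac e != 0 :> {fraction R} by rewrite tofrac_eq0.
rewrite divB_gen // -!rmorphM -rmorphB.
rewrite !liftF_frac ?mulf_neq0 //.
have fb := fneq0 hb; have fe := fneq0 he.
by rewrite divB_gen // rmorphB !rmorphM.
Qed.

Lemma liftF_is_monoid : monoid_morphism lF.
Proof.
split.
  have := liftF_tofrac 1; by rewrite !rmorph1.
move=> x y.
have [a [b [hb ->]]] := frac_ex x.
have [c [e [he ->]]] := frac_ex y.
rewrite mulf_div -!rmorphM.
rewrite !liftF_frac ?mulf_neq0 //.
by rewrite mulf_div !rmorphM.
Qed.

HB.instance Definition _ := GRing.isZmodMorphism.Build _ _ lF liftF_is_zmod.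
HB.instance Definition _ := GRing.isMonoidMorphism.Build _ _ lF liftF_is_monoid.
End Lift.

Lemma cfuC (T : comNzRingType) (R : nzRingType) (f : {rmorphism R -> T}) u : commr_rmorph f u.
Proof. by move=> x; exact: mulrC. Qed.

Fixpoint Smor (T : comNzRingType) (s : nat -> T) (k : nat) : {rmorphism mp k -> T} :=
  match k return {rmorphism mp k -> T} with
  | 0 => (intr : {rmorphism int -> T})
  | k'.+1 => (horner_morph (cfuC (Smor s k') (s k')) : {rmorphism {poly mp k'} -> T})
  end.

Lemma Smor_var (T : comNzRingType) (s : nat -> T) k v :
  Smor s k (mvar k v) = if (v < k)%N then s v else 0.
Proof.
elim: k => [|k IH] /=; first by rewrite rmorph0.
case: eqP => [->|hv].
  by rewrite horner_morphX ltnSn.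
rewrite horner_morphC IH ltnS [(v <= k)%N]leq_eqVlt.
by have -> : (v == k) = false by apply/eqP.
Qed.

Lemma Smor_unique (T : comNzRingType) k (f g : {rmorphism mp k -> T}) :
  (forall v, (v < k)%N -> f (mvar k v) = g (mvar k v)) -> forall p, f p = g p.
Proof.
elim: k f g => [|k IH] f g hfg p /=.
  by move: p f g {hfg} => /= p f g; rewrite -[p]intz (rmorph_int f) (rmorph_int g).
have hC : forall q : mp k, f (q%:P : {poly mp k}) = g (q%:P).
  have := IH (f \o polyC) (g \o polyC).
  apply => v hv /=.
  have := hfg v (ltnW hv) => /=.
  by rewrite (ltn_eqF hv).
have hX : f ('X : {poly mp k}) = g 'X.
  have := hfg k (ltnSn k) => /=. by rewrite eqxx.
rewrite -[p]coefK poly_def !rmorph_sum /=; apply: eq_bigr => i _.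
by rewrite -mul_polyC !rmorphM /= !rmorphXn /= hC hX.
Qed.

Fixpoint Hmor (c : nat -> nat) (k : nat) : {rmorphism mp k -> mp k} :=
  match k return {rmorphism mp k -> mp k} with
  | 0 => (idfun : {rmorphism int -> int})
  | k'.+1 => (horner_morph (cfuC (polyC \o Hmor c k' : {rmorphism _ -> {poly mp k'}}) (((c k')%:R)%:P * 'X)) : {rmorphism {poly mp k'} -> {poly mp k'}})
  end.

Lemma natr_mp_eq0 k (m : nat) : ((m%:R : mp k) == 0) = (m == 0%N).
Proof.
elim: k => [|k IH] /=; first by rewrite pnatr_eq0.
by rewrite -polyC_natr polyC_eq0 IH.
Qed.

Lemma Hmor_coef (c : nat -> nat) k (p : mp k.+1) j : (j < size p)%N ->
  (Hmor c k.+1 p : {poly mp k})`_j = Hmor c k (p`_j) * ((c k)%:R) ^+ j.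
Proof.
move=> hj /=.
rewrite /horner_morph (horner_coef_wide _ (size_poly _ _)).
rewrite (eq_bigr (fun i : 'I_(size p) => (Hmor c k p`_i * (c k)%:R ^+ i) *: 'X^i)); last first.
  move=> i _; rewrite coef_map /= exprMn -polyC_exp -!mul_polyC mulrA -polyCM //.
rewrite coef_sumMXn (eq_bigl (fun i : 'I_(size p) => i == j :> nat)) // (big_ord1_eq _ (fun i => Hmor c k p`_i * (c k)%:R ^+ i)) hj.
by []. Qed.

Lemma Hmor_inj (c : nat -> nat) k : (forall v, 0 < c v)%N -> injective (Hmor c k).
Proof.
move=> hc; elim: k => [|k IH] /=; first by move=> x y.
apply: raddf_inj => p hp.
apply/polyP => j; rewrite coef0.
case: (ltnP j (size p)) => hj; last by rewrite nth_default.
have := Hmor_coef c hj; rewrite hp coef0 => /esym /eqP.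
have hck : (c k == 0%N) = false by apply/negbTE; rewrite -lt0n hc.
rewrite mulf_eq0 expf_eq0 natr_mp_eq0 hck andbF orbF => /eqP h.
by apply: IH; rewrite h rmorph0.
Qed.

Lemma Hmor_var (c : nat -> nat) k v : (v < k)%N ->
  Hmor c k (mvar k v) = (c v)%:R * mvar k v.
Proof.
elim: k => [//|k IH] hv /=.
case: eqP => [->|hne].
  by rewrite horner_morphX polyC_natr.
rewrite horner_morphC /= IH; last by rewrite ltnS leq_eqVlt in hv; case/orP: hv => // /eqP.
by rewrite polyCM polyC_natr.
Qed.

Lemma mvar_out k v : (k <= v)%N -> mvar k v = 0.
Proof.
elim: k => [//|k IH] hv /=.
by rewrite (gtn_eqF hv) IH ?rmorph0 // ltnW.
Qed.

Lemma fvar_Smor K v : fvar K v = Smor (fvar K) K (mvar K v).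
Proof.
rewrite Smor_var; case: ltnP => // h.
by rewrite /fvar mvar_out // rmorph0.
Qed.

Lemma tofrac_inj (R : idomainType) : injective (@FracField.tofrac R).
Proof. by move=> x y /eqP; rewrite tofrac_eq => /eqP. Qed.

Lemma exists_sigma K (w : nat -> int) (m : nat) : (0 < m)%N ->
  exists sigma : {rmorphism FF K -> FF K},
    forall v, sigma (fvar K v) = (m%:R : FF K) ^ (w v) * fvar K v.
Proof.
move=> hm.
set c : FF K := m%:R.
have c0 : c != 0.
  rewrite /c -(rmorph_nat (@FracField.tofrac (mp K))) tofrac_eq0 natr_mp_eq0.
  by rewrite -lt0n.
set A : nat := (\sum_(v < K) `|w v|)%N.
have hA : forall v, (v < K)%N -> 0 <= w v + A%:Z.
  move=> v hv.
  have : (`|w v| <= A)%N.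
    by rewrite /A (bigD1 (Ordinal hv)) //= leq_addr.
  move=> h; have h2 : (`|w v|%:Z <= A%:Z) by rewrite lez_nat.
  lia.
set sw : nat -> FF K := fun v => c ^ (w v) * fvar K v.
set S := Smor sw K.
set HA := Hmor (fun _ => m ^ A)%N K.
have HAi : injective HA by apply: Hmor_inj => v; rewrite expn_gt0 hm.
set Ea := Hmor (fun v => (m ^ absz ((w v + A%:Z)%R))%N) K.
have Eai : injective Ea by apply: Hmor_inj => v; rewrite expn_gt0 hm.
have f1inj : injective (@FracField.tofrac (mp K) \o HA).
  by move=> x y /= /tofrac_inj /HAi.
set E := liftF f1inj.
have ES : forall p, E (S p) = FracField.tofrac (Ea p).
  move=> p; apply: (@Smor_unique _ K (E \o S) (@FracField.tofrac (mp K) \o Ea) _ p) => v hv /=.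
  rewrite /S Smor_var hv /sw rmorphM /= fmorphXz rmorph_nat.
  rewrite /fvar liftF_tofrac /= /HA /Ea !Hmor_var // !rmorphM /= !rmorph_nat.
  rewrite mulrA; congr (_ * _).
  rewrite !natrX !exprnP -expfzDr; last by rewrite -/c.
  by rewrite gez0_abs // hA.
have Sinj : injective S.
  apply: raddf_inj => p hp.
  have := ES p; rewrite hp /E rmorph0 => /esym /eqP; rewrite tofrac_eq0 => /eqP.
  move=> h; apply: Eai; by rewrite h rmorph0.
exists (liftF Sinj) => v.
change (liftF Sinj (FracField.tofrac (mvar K v)) = c ^ w v * fvar K v).
rewrite liftF_tofrac /S Smor_var; case: ltnP => // hv.
by rewrite /fvar mvar_out // rmorph0 mulr0.
Qed.

Local Close Scope quotient_scope.

Section Eig.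
Variables (n : nat) (d : 'I_n -> nat) (B0 : 'M[int]_n) (r : 'I_n).

Definition wt (v : nat) : int :=
  (v == r :> nat)%:Z - \sum_(j < n) ((v == n + j)%N)%:Z * B0 r j.
Definition tdeg (e : trop) : int := \sum_(v < Nvars d | (n <= v)%N) wt v * e v.

Lemma tdegM a b : tdeg (tmul a b) = tdeg a + tdeg b.
Proof. by rewrite /tdeg -big_split; apply: eq_bigr => v _; rewrite /tmul mulrDr. Qed.
Lemma tdegX a z : tdeg (tpow a z) = tdeg a * z.
Proof. by rewrite /tdeg mulr_suml; apply: eq_bigr => v _; rewrite /tpow mulrA. Qed.
Lemma tdegV a : tdeg (tinv a) = - tdeg a.
Proof. by rewrite /tdeg -sumrN; apply: eq_bigr => v _; rewrite /tinv mulrN. Qed.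

Variables (sigma : {rmorphism Fld d -> Fld d}) (c : Fld d) (c0 : c != 0)
  (hs : forall v, sigma (var d v) = c ^ wt v * var d v).

Definition eig (u : Fld d) (a : int) := sigma u = c ^ a * u.

Lemma eig_eq u a b : a = b -> eig u a -> eig u b.
Proof. by move=> ->. Qed.

Lemma eigM u v a b : eig u a -> eig v b -> eig (u * v) (a + b).
Proof.
rewrite /eig => hu hv; rewrite rmorphM /= hu hv expfzDr //.
by rewrite mulrACA.
Qed.

Lemma eigV u a : eig u a -> eig u^-1 (- a).
Proof.
rewrite /eig => hu; rewrite fmorphV /= hu invfM -invr_expz.
by rewrite mulrC.
Qed.

Lemma eigXz u a z : eig u a -> eig (u ^ z) (a * z).
Proof.
rewrite /eig => hu; rewrite fmorphXz /= hu expfzMl exprz_exp //.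
Qed.

Lemma eigXn u a (N : nat) : eig u a -> eig (u ^+ N) (a * N%:Z).
Proof. by move=> h; rewrite exprnP; apply: eigXz. Qed.

Lemma eig1 : eig 1 0.
Proof. by rewrite /eig rmorph1 expr0z mulr1. Qed.

Lemma eig0 a : eig 0 a.
Proof. by rewrite /eig rmorph0 mulr0. Qed.

Lemma eig_int z a : a = 0 -> eig (z%:~R) a.
Proof. by move=> ->; rewrite /eig rmorph_int expr0z mul1r. Qed.

Lemma eig_prod (I : Type) (s : seq I) (P : pred I) (F : I -> Fld d) (a : I -> int) :
  (forall i, P i -> eig (F i) (a i)) ->
  eig (\prod_(i <- s | P i) F i) (\sum_(i <- s | P i) a i).
Proof.
move=> h.
apply: (big_rec2 (fun x y => eig y x)); first exact: eig1.
by move=> i x y Pi hxy; apply: eigM => //; apply: h.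
Qed.

Lemma eig_sum (I : Type) (s : seq I) (P : pred I) (F : I -> Fld d) a :
  (forall i, P i -> eig (F i) a) -> eig (\sum_(i <- s | P i) F i) a.
Proof.
move=> h.
apply: (big_rec (fun y => eig y a)); first exact: eig0.
move=> i y Pi hy; rewrite /eig rmorphD /= mulrDr.
by rewrite (h i Pi) hy.
Qed.

Lemma eig_var v : eig (var d v) (wt v).
Proof. exact: hs. Qed.

Lemma eig_temb e : eig (temb d e) (tdeg e).
Proof.
apply: eig_prod => v _; apply: eigXz; exact: eig_var.
Qed.

Lemma wt_big v : (2 * n <= v)%N -> wt v = 0.
Proof.
move=> hv; rewrite /wt.
have -> : (v == r :> nat) = false.
  apply/negbTE; rewrite neq_ltn; apply/orP; right.
  by apply: (leq_trans (ltn_ord r)); apply: leq_trans hv; rewrite leq_pmull.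
rewrite big1 ?subr0 // => j _.
have -> : (v == (n + j)%N) = false.
  apply/negbTE; rewrite neq_ltn; apply/orP; right.
  by apply: leq_trans hv; rewrite mul2n -addnn ltn_add2l.
by rewrite mul0r.
Qed.

Lemma eig_fz k s : eig (fz d k s) 0.
Proof.
rewrite /fz; case: ifP => _; first exact: eig1.
apply: eig_eq (eig_var _); apply: wt_big.
by rewrite /zidx -addnA leq_addr.
Qed.

End Eig.

Lemma pp_pos (a : int) : 0 <= a -> pp a = a.
Proof. by move=> h; rewrite /pp; apply/max_idPl. Qed.
Lemma pp_neg (a : int) : a <= 0 -> pp a = 0.
Proof. by move=> h; rewrite /pp; apply/max_idPr. Qed.

Section Inv.
Variables (n : nat) (d : 'I_n -> nat) (B0 : 'M[int]_n) (r : 'I_n) (D : 'I_n -> nat).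
Hypothesis hD : forall i, (0 < D i)%N.

Definition sigP (m : nat) (s : {rmorphism Fld d -> Fld d}) :=
  forall v, s (var d v) = (m%:R : Fld d) ^ wt B0 r v * var d v.

Definition skewD (B : 'M[int]_n) := forall i j, (D i)%:Z * B i j = - ((D j)%:Z * B j i).

Definition Inv (S : seed d) : Prop := exists g : 'I_n -> int,
  (forall m s, (0 < m)%N -> sigP m s -> forall j, s (sx S j) = (m%:R) ^ (g j) * sx S j) /\
  (forall j, tdeg d B0 r (sy S j) + \sum_l sB S l j * g l = 0).

Lemma skew_diag B : skewD B -> forall i, B i i = 0.
Proof. move=> h i; have := h i i; have := hD i; lia. Qed.

Lemma nat_m0 (m : nat) : (0 < m)%N -> (m%:R : Fld d) != 0.
Proof.
move=> hm; rewrite /Fld /FF -(rmorph_nat (@FracField.tofrac _)) tofrac_eq0 natr_mp_eq0.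
by rewrite -lt0n.
Qed.

Lemma Inv_mut k S : skewD (sB S) -> Inv S -> Inv (mutate k S).
Proof.
move=> hsk [g [hx hy]].
have Bkk := skew_diag hsk k.
set B := sB S in hsk hy Bkk *; set x := sx S in hx *; set y := sy S in hy *.
set T := tdeg d B0 r (tsum d k (y k)).
exists (fun j => if j == k then - g k + (\sum_l g l * pp (- B l k)) * (d k)%:Z - T else g j).
split.
  move=> m s hm hs j; rewrite /mutate /= /mutx.
  have c0 := nat_m0 hm.
  case: (j =P k) => [hjk|hne]; last exact: hx.
  subst j.
  have hxj : forall l, eig s (m%:R) (x l) (g l) by move=> l; exact: hx.
  have hyh : eig s (m%:R) (yhat B x y k) 0.
    apply: eig_eq; last first.
      apply: (eigM c0); first exact: (eig_temb c0 hs).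
      apply: (eig_prod c0) => l _; apply: eigXz; exact: hxj.
    by rewrite (eq_bigr (fun l => B l k * g l)) ?(hy k) // => l _; rewrite mulrC.
  apply: eig_eq; last first.
    apply: (eigM c0); last by apply: eigV; apply: (eig_temb c0 hs).
    apply: (eigM c0); last first.
      apply: (@eig_sum _ _ _ _ _ _ _ _ 0) => s0 _.
      apply: eig_eq; last first.
        apply: (eigM c0); first exact: (eig_fz hs).
        by apply: eigXn; apply: hyh.
      by rewrite mul0r addr0.
    apply: (eigM c0); first by apply: eigV; apply: hxj.
    apply: eigXn; apply: (eig_prod c0) => l _; apply: eigXz; exact: hxj.
  by rewrite addr0.
move=> j; rewrite /mutate /= -/B -/y.
have hyk := hy k; rewrite (bigD1 k) //= Bkk mul0r add0r in hyk.
case: (j =P k) => [->|/eqP hjk].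
  rewrite /muty eqxx tdegV (bigD1 k) //= !mxE eqxx orbT Bkk oppr0 mul0r add0r.
  rewrite (eq_bigr (fun l => - (B l k * g l))); last first.
    by move=> l hl; rewrite !mxE eqxx orbT (negbTE hl) mulNr.
  by rewrite sumrN -opprD hyk oppr0.
have hyj := hy j; rewrite (bigD1 k) //= in hyj.
rewrite /muty (negbTE hjk) !tdegM !tdegX (bigD1 k) //= !mxE eqxx /=.
rewrite [\sum_(i < n | i != k) _](eq_bigr (fun l => B l j * g l + ((d k)%:Z * B k j) * (g l * pp (- B l k))
   + ((d k)%:Z * pp (B k j)) * (B l k * g l))); last first.
  move=> l hl; rewrite mxE (negbTE hl) (negbTE hjk) /=. ring.
rewrite !big_split /= -!mulr_sumr.
rewrite [\sum_(l < n) _](bigD1 k) //= Bkk oppr0 (pp_pos (lexx 0)) mulr0 add0r.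
set R1 := \sum_(l | l != k) B l j * g l in hyj *.
set R2 := \sum_(l | l != k) B l k * g l in hyk *.
set R3 := \sum_(l | l != k) g l * pp (- B l k).
have ej : tdeg d B0 r (y j) = - (B k j * g k + R1) by lia.
have ek : tdeg d B0 r (y k) = - R2 by lia.
rewrite ej ek. ring.
Qed.

Lemma key_skew (Di Dj Dk : nat) (a b c e : int) : (0 < Di)%N -> (0 < Dj)%N -> (0 < Dk)%N ->
  Di%:Z * a = - (Dk%:Z * c) -> Dk%:Z * b = - (Dj%:Z * e) ->
  Di%:Z * (pp (- a) * b + a * pp b) = - (Dj%:Z * (pp (- e) * c + e * pp c)).
Proof.
move=> h1 h2 h3 e1 e2.
case: (lerP 0 a) => ha; case: (lerP 0 b) => hb.
- have hc : c <= 0 by nia.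
  have he : e <= 0 by nia.
  rewrite (pp_neg (a := - a)) ?oppr_le0 // (pp_pos hb) (pp_pos (a := - e)) ?oppr_ge0 //.
  rewrite (pp_neg hc). nia.
- have hc : c <= 0 by nia.
  have he : 0 <= e by nia.
  rewrite (pp_neg (a := - a)) ?oppr_le0 // (pp_neg (ltW hb)) (pp_neg (a := - e)) ?oppr_le0 //.
  rewrite (pp_neg hc). nia.
- have hc : 0 <= c by nia.
  have he : e <= 0 by nia.
  rewrite (pp_pos (a := - a)) ?oppr_ge0 ?(ltW ha) // (pp_pos hb) (pp_pos (a := - e)) ?oppr_ge0 //.
  rewrite (pp_pos hc). nia.
- have hc : 0 <= c by nia.
  have he : 0 <= e by nia.
  rewrite (pp_pos (a := - a)) ?oppr_ge0 ?(ltW ha) // (pp_neg (ltW hb)) (pp_neg (a := - e)) ?oppr_le0 //.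
  rewrite (pp_pos hc). nia.
Qed.

Lemma mut_skew k B : skewD B -> skewD (mutB d k B).
Proof.
move=> hs i j; rewrite !mxE.
case: (i =P k) => [->|/eqP hik] /=.
  by rewrite orbT /= !mulrN hs opprK.
case: (j =P k) => [->|/eqP hjk] /=.
  by rewrite !mulrN hs opprK.
have e0 := hs i j.
have ek := key_skew (hD i) (hD j) (hD k) (hs i k) (hs k j).
rewrite [LHS]mulrDr [in RHS]mulrDr e0 opprD; congr (_ + _).
by rewrite mulrCA ek [in RHS]mulrCA mulrN.
Qed.
Lemma sum_pick N (P : pred nat) (F : nat -> int) a : (a < N)%N -> P a ->
  \sum_(v < N | P v) (if (v == a :> nat) then F v else 0) = F a.
Proof.
move=> ha Pa; rewrite (bigD1 (Ordinal ha)) //= eqxx big1 ?addr0 // => v /andP [_ hv].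
by rewrite ifF //; apply/negbTE; apply: contra hv => /eqP h; apply/eqP; apply: val_inj.
Qed.

Lemma wt_lt v : (v < n)%N -> wt B0 r v = (v == r :> nat)%:Z.
Proof.
move=> hv; rewrite /wt big1 ?subr0 // => j _.
have -> : (v == n + j)%N = false.
  by apply/negbTE; rewrite neq_ltn; apply/orP; left; apply: (leq_trans hv); rewrite leq_addr.
by rewrite mul0r.
Qed.

Lemma wt_y (j : 'I_n) : wt B0 r (n + j) = - B0 r j.
Proof.
rewrite /wt; have -> : (n + j == r :> nat) = false.
  apply/negbTE; rewrite neq_ltn; apply/orP; right; apply: (leq_trans (ltn_ord r)); rewrite leq_addr //.
rewrite sub0r; congr (- _).
rewrite (bigD1 j) //= eqxx mul1r big1 ?addr0 // => l hl.
have -> : (n + j == n + l)%N = false.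
  by apply/negbTE; rewrite eqn_add2l; apply: contra hl => /eqP h; apply/eqP; apply: val_inj.
by rewrite mul0r.
Qed.

Lemma yidx_lt (j : 'I_n) : (yidx j < Nvars d)%N.
Proof.
rewrite /yidx /Nvars; apply: (@leq_trans (2 * n)%N); last exact: leq_addr.
by rewrite mul2n -addnn ltn_add2l.
Qed.

Lemma tdeg_tvar (j : 'I_n) : tdeg d B0 r (tvar (yidx j)) = - B0 r j.
Proof.
rewrite /tdeg (eq_bigr (fun v : 'I_(Nvars d) => if (v == yidx j :> nat) then wt B0 r v else 0)).
  by rewrite (@sum_pick (Nvars d) (fun v => n <= v)%N (wt B0 r) (yidx j)) ?yidx_lt ?wt_y // /yidx leq_addr.
by move=> v _; rewrite /tvar; case: ifP; rewrite ?mulr1 ?mulr0.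
Qed.

Lemma Inv_init : Inv (init_seed d B0).
Proof.
exists (fun j => (j == r :> nat)%:Z); split.
  move=> m s hm hs j /=; by rewrite hs wt_lt.
move=> j /=; rewrite tdeg_tvar (bigD1 r) //= eqxx mulr1 big1 ?addr0 ?addNr // => l hl.
have -> : (l == r :> nat) = false by apply/negbTE.
by rewrite mulr0.
Qed.

Lemma Inv_fold (w : seq 'I_n) S : Inv S -> skewD (sB S) ->
  Inv (foldl (fun S k => mutate k S) S w) /\ skewD (sB (foldl (fun S k => mutate k S) S w)).
Proof.
elim: w S => [|k w IH] S hI hS //=.
apply: IH; first exact: Inv_mut.
exact: mut_skew.
Qed.
End Inv.

Lemma natr_mp_inj k (a b : nat) : (a%:R : mp k) = b%:R -> a = b.
Proof.
elim: k => [|k IH] /=; first by move/eqP; rewrite eqr_nat => /eqP.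
by rewrite -!polyC_natr => /polyC_inj /IH.
Qed.

Lemma natr_FF_inj K (a b : nat) : (a%:R : FF K) = b%:R -> a = b.
Proof.
rewrite /FF -!(rmorph_nat (@FracField.tofrac (mp K))) => /tofrac_inj.
exact: natr_mp_inj.
Qed.

Lemma poly_many_roots K (p : {poly FF K}) :
  (forall m : nat, (0 < m)%N -> p.[m%:R] = 0) -> p = 0.
Proof.
move=> h; apply/eqP; apply/negPn/negP => hp.
have := @max_poly_roots _ p [seq (i.+1)%:R | i <- iota 0 (size p)] hp.
rewrite size_map size_iota ltnn => H; suff : false by []; apply: H.
  by apply/allP => x /mapP [i _ ->]; apply/eqP; apply: h.
by rewrite map_inj_uniq ?iota_uniq // => i j /natr_FF_inj; case.
Qed.

Section Extract.
Variables (n : nat) (d : 'I_n -> nat) (B0 : 'M[int]_n) (r : 'I_n).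
Variables (sigma : {rmorphism Fld d -> Fld d}) (c : Fld d) (c0 : c != 0)
  (hs : forall v, sigma (var d v) = c ^ wt B0 r v * var d v).

Lemma eig_monv (t : mono n) : eig sigma c (monv d t) (mdeg B0 t r).
Proof.
apply: eig_eq; last first.
  apply: (eigM c0).
    apply: (eig_prod c0) => j _; apply: eigXz; exact: (eig_var hs).
  apply: (eig_prod c0) => v _; apply: eigXn; exact: (eig_var hs).
rewrite /mdeg; congr (_ + _).
  rewrite (eq_bigr (fun j : 'I_n => if (j == r) then t.1 j else 0)).
    by rewrite -big_mkcond /= big_pred1_eq.
  move=> j _; rewrite wt_lt //; case: (j =P r) => [->|/eqP hj].
    by rewrite eqxx mul1r.
  have hj2 : (j == r :> nat) = false by apply/negbTE.
  by rewrite hj2 mul0r.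
rewrite (eq_bigr (fun v : 'I_(Nvars d) => \sum_(j < n) (if (v == yidx j :> nat) then - (B0 r j * (t.2 v)%:Z) else 0))).
  rewrite exchange_big /= -sumrN; apply: eq_bigr => j _.
  rewrite (@sum_pick (Nvars d) (fun v => n <= v)%N (fun v => -(B0 r j * (t.2 v)%:Z)) (yidx j)) ?yidx_lt //.
  by rewrite /yidx leq_addr.
move=> v hv; rewrite /wt.
have -> : (v == r :> nat) = false.
  apply/negbTE; rewrite neq_ltn; apply/orP; right; exact: (leq_trans (ltn_ord r) hv).
rewrite sub0r mulNr mulr_suml -sumrN; apply: eq_bigr => j _.
rewrite /yidx; case: eqP => _; by rewrite ?mul1r ?mul0r ?oppr0.
Qed.
End Extract.

Fixpoint AllP (T : Type) (P : T -> Prop) (s : seq T) : Prop :=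
  if s is x :: s' then P x /\ AllP P s' else True.

Lemma big_AllP (R : Type) (idx : R) (op : R -> R -> R) T (s : seq T) (F G : T -> R) (P : T -> Prop) :
  AllP P s -> (forall t, P t -> F t = G t) -> \big[op/idx]_(t <- s) F t = \big[op/idx]_(t <- s) G t.
Proof.
move=> hA hFG; elim: s hA => [|x s IH] /= hA; first by rewrite !big_nil.
by case: hA => h1 h2; rewrite !big_cons hFG // IH.
Qed.

Lemma abs_le_sum (T : Type) (L : seq T) (f : T -> int) S :
  (\sum_(u <- L) `|f u| <= S)%N -> AllP (fun t => (`|f t| <= S)%N) L.
Proof.
elim: L => [|x L IH] //= ; rewrite big_cons => h; split.
  exact: leq_trans (leq_addr _ _) h.
by apply: IH; exact: leq_trans (leq_addl _ _) h.
Qed.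

Lemma AllP_impl T (P Q : T -> Prop) s : (forall t, P t -> Q t) -> AllP P s -> AllP Q s.
Proof. by move=> h; elim: s => //= x s IH [h1 h2]; split; [apply: h|apply: IH]. Qed.

Lemma extract n (d : 'I_n -> nat) (B0 : 'M[int]_n) (r : 'I_n)
  (X : Fld d) (G : int) (L : seq (int * mono n)) :
  (forall m s, (0 < m)%N -> sigP B0 r m s -> s X = (m%:R)^G * X) ->
  lpoly d L = X ->
  lpoly d (filter (fun t => mdeg B0 t.2 r == G) L) = X.
Proof.
move=> hX hL.
set N : nat := ((\sum_(t <- L) `|mdeg B0 t.2 r|) + `|G|)%N.
have hN : AllP (fun t : int * mono n => 0 <= mdeg B0 t.2 r + N%:Z) L.
  apply: AllP_impl (abs_le_sum (f := fun u : int * mono n => mdeg B0 u.2 r) (leq_addr `|G| _)).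
  rewrite /N => t h; lia.
have hG : 0 <= G + N%:Z by rewrite /N; lia.
set q : {poly Fld d} := \sum_(t <- L) (t.1%:~R * monv d t.2) *: 'X^(absz (mdeg B0 t.2 r + N%:Z)).
have hq : forall m, (0 < m)%N -> q.[m%:R] = (m%:R) ^+ (absz (G + N%:Z)) * X.
  move=> m hm.
  have c0 : (m%:R : Fld d) != 0 by apply: nat_m0.
  have [s hs] := exists_sigma (Nvars d) (wt B0 r) hm.
  have hs' : sigP B0 r m s by move=> v; exact: hs.
  rewrite /q horner_sum.
  rewrite (@big_AllP _ _ _ _ _ _ (fun t => m%:R ^+ N * (t.1%:~R * s (monv d t.2))) _ hN); last first.
    move=> t ht; rewrite hornerZ hornerXn (eig_monv c0 hs') exprnP gez0_abs ?ht //.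
    rewrite expfzDr // -exprnP. ring.
  rewrite -mulr_sumr.
  have -> : \sum_(t <- L) t.1%:~R * s (monv d t.2) = s (lpoly d L).
    by rewrite /lpoly rmorph_sum /=; apply: eq_bigr => t _; rewrite [RHS]rmorphM /= rmorph_int.
  rewrite hL (hX m s hm hs') !exprnP gez0_abs // expfzDr //. ring.
have hr : q - X *: 'X^(absz (G + N%:Z)) = 0.
  apply: poly_many_roots => m hm.
  by rewrite hornerD hornerN hornerZ hornerXn hq // mulrC subrr.
have := congr1 (fun p : {poly Fld d} => p`_(absz (G + N%:Z))) hr.
rewrite coefB coefZ coefXn eqxx mulr1 coef0 => /eqP; rewrite subr_eq0 => /eqP <-.
rewrite /q coef_sumMXn /lpoly big_filter big_mkcond [RHS]big_mkcond.
apply: (@big_AllP _ _ _ _ L _ _ _ hN) => t ht /=.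
have -> : (absz (mdeg B0 t.2 r + N%:Z) == absz (G + N%:Z)) = (mdeg B0 t.2 r == G) => //.
apply/eqP/eqP => [e|->] //.
move: e; lia.
Qed.

Theorem mainTheorem10 (n : nat) (d : 'I_n -> nat) (B : 'M[int]_n)
  (hd : forall i, (0 < d i)%N) (hB : skew_symmetrizable B)
  (w : seq 'I_n) (hw : reduced w) (i : 'I_n)
  (L : seq (int * mono n))
  (hL : lpoly d L = sx (seed_at d B w) i) :
  homogeneous d B L.
Proof.
have [D [hD hsk]] := hB.
set S := seed_at d B w.
have hex : forall r : 'I_n, exists G : int, forall m s, (0 < m)%N -> sigP B r m s ->
    s (sx S i) = (m%:R) ^ G * sx S i.
  move=> r.
  have [[g [hg _]] _] := Inv_fold (r := r) hD w (Inv_init d B r) hsk.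
  by exists (g i) => m s hm hs; apply: hg.
have [Gf hGf] := fin_all_exists hex.
exists Gf, (filter (fun t => [forall r, mdeg B t.2 r == Gf r]) L); split.
  exact: filter_all.
have step : forall k, (k <= n)%N ->
    lpoly d (filter (fun t => [forall r : 'I_n, (r < k)%N ==> (mdeg B t.2 r == Gf r)]) L) = sx S i.
  elim => [|k IH] hk.
    by rewrite (eq_filter (a2 := predT)) ?filter_predT // => t; apply/forallP.
  have hk' : (k < n)%N := hk.
  have -> : filter (fun t => [forall r : 'I_n, (r < k.+1)%N ==> (mdeg B t.2 r == Gf r)]) L
      = filter (fun t => mdeg B t.2 (Ordinal hk') == Gf (Ordinal hk'))
          (filter (fun t => [forall r : 'I_n, (r < k)%N ==> (mdeg B t.2 r == Gf r)]) L).
    rewrite -filter_predI; apply: eq_filter => t /=.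
    apply/forallP/andP => [h|[h1 /forallP h2] r].
      split; first by have := h (Ordinal hk'); rewrite /= ltnSn.
      by apply/forallP => r; apply/implyP => hr; have := h r; rewrite ltnS (ltnW hr).
    apply/implyP; rewrite ltnS leq_eqVlt => /orP [/eqP hr|hr].
      by have -> : r = Ordinal hk' by apply: val_inj.
    by have := h2 r; rewrite hr.
  apply: extract; last exact: IH (ltnW hk).
  exact: hGf.
have := step n (leqnn n); rewrite -hL => <-.
congr lpoly; apply: eq_filter => t.
by apply/forallP/forallP => h r; have := h r; rewrite ltn_ord.
Qed.
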